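(* Let $s\ge0$. Then for every $t\in\mathbb{R}$ the trilinear operator $B_3$ defined in the context maps $(\dot H^s)^3$ into $\dot H^{s+2}$ and satisfies $$\|B_3(u,v,w)\|_{\dot H^{s+2}}\le c_3(s)\|u\|_{\dot H^s}\|v\|_{\dot H^s}\|w\|_{\dot H^s},$$ with a constant $c_3(s)$ depending only on $s$.
   Context: Write $\mathbb{Z}_0=\mathbb{Z}\setminus\{0\}$. For $s\in\mathbb{R}$, $\dot H^s$ denotes the Hilbert space of complex sequences $v=(v_k)_{k\in\mathbb{Z}_0}$ with $\|v\|_{\dot H^s}^2=\sum_{k\in\mathbb{Z}_0}|k|^{2s}|v_k|^2<\infty$. For $t\in\mathbb{R}$, $$B_3(u,v,w)_k=\sum^{\mathrm{nonres}}_{k_1+k_2+k_3=k}\frac{e^{3i(k_1+k_2)(k_2+k_3)(k_3+k_1)t}}{k_1(k_1+k_2)(k_2+k_3)(k_3+k_1)}u_{k_1}v_{k_2}w_{k_3},\qquad k\in\mathbb{Z}_0,$$ where the sum runs over $k_1,k_2,k_3\in\mathbb{Z}_0$ with $k_1+k_2+k_3=k$ and $(k_1+k_2)(k_2+k_3)(k_3+k_1)\ne0$. *)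

(* Defs.v *)
From Stdlib Require Import Reals ZArith Lra.
From Coquelicot Require Import Coquelicot.
Open Scope R_scope.

(* Sequences indexed by Z_0 = Z \ {0} are represented as functions Z -> C;
   the value at 0 is ignored everywhere (all sums below skip index 0). *)
Definition seqZ := Z -> C.

Definition zpair (f : Z -> R) (n : nat) : R :=
  match n with
  | O => f 0%Z
  | S m => f (Z.of_nat m + 1)%Z + f (- (Z.of_nat m + 1))%Z
  end.

Definition zsummable (f : Z -> C) : Prop :=
  ex_series (zpair (fun k => Cmod (f k))).

(* Sum over Z of a real family, and of a complex family (componentwise).
   For absolutely summable families this is the unconditional sum. *)
Definition ZsumR (f : Z -> R) : R := Series (zpair f).
Definition Zsum (f : Z -> C) : C :=
  (ZsumR (fun k => Re (f k)), ZsumR (fun k => Im (f k))).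

(* Absolute summability of a complex family over Z x Z (iterated form,
   equivalent to absolute summability on Z^2 by Tonelli). *)
Definition zsummable2 (F : Z -> Z -> C) : Prop :=
  (forall k1, zsummable (F k1)) /\
  ex_series (zpair (fun k1 => ZsumR (fun k2 => Cmod (F k1 k2)))).

Definition Hdot_term (s : R) (v : seqZ) (k : Z) : R :=
  if Z.eqb k 0 then 0
  else Rpower (IZR (Z.abs k)) (2 * s) * (Cmod (v k)) ^ 2.

Definition in_Hdot (s : R) (v : seqZ) : Prop :=
  ex_series (zpair (Hdot_term s v)).

Definition Hdot_norm (s : R) (v : seqZ) : R :=
  sqrt (ZsumR (Hdot_term s v)).

Definition cexpi (theta : R) : C := (cos theta, sin theta).

Definition B3_term (t : R) (u v w : seqZ) (k k1 k2 : Z) : C :=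
  let k3 := (k - k1 - k2)%Z in
  let p := ((k1 + k2) * (k2 + k3) * (k3 + k1))%Z in
  if (Z.eqb k1 0 || Z.eqb k2 0 || Z.eqb k3 0 || Z.eqb p 0)%bool then RtoC 0
  else Cmult
         (Cdiv (cexpi (3 * IZR p * t)) (RtoC (IZR (k1 * p))))
         (Cmult (u k1) (Cmult (v k2) (w k3))).

Definition B3 (t : R) (u v w : seqZ) : seqZ :=
  fun k => Zsum (fun k1 => Zsum (fun k2 => B3_term t u v w k k1 k2)).

(* Main.v *)
Require Import Defs.
From Stdlib Require Import Reals ZArith.
From Coquelicot Require Import Coquelicot.
From Stdlib Require Import Lra Lia List FinFun.
Open Scope R_scope.

Lemma sumn_S (a : nat -> R) n : sum_n a (S n) = sum_n a n + a (S n).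
Proof. rewrite sum_Sn. reflexivity. Qed.

Lemma sumn_grow (a : nat -> R) : (forall n, 0 <= a n) -> Un_growing (sum_n a).
Proof. intros H n. rewrite sumn_S. specialize (H (S n)). lra. Qed.

Lemma nonneg_series (a : nat -> R) (M : R) :
  (forall n, 0 <= a n) -> (forall N, sum_n a N <= M) -> ex_series a /\ Series a <= M.
Proof.
  intros H HM.
  assert (hub : has_ub (sum_n a)).
  { exists M. intros x [i ->]. apply HM. }
  destruct (growing_cv _ (sumn_grow a H) hub) as [l Hl].
  assert (Hs : is_series a l). { apply is_lim_seq_Reals in Hl. exact Hl. }
  split. exists l; exact Hs.
  rewrite (is_series_unique _ _ Hs).
  apply is_lim_seq_Reals in Hl.
  assert (Hle := is_lim_seq_le (sum_n a) (fun _ => M) l M HM Hl (is_lim_seq_const M)).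
  simpl in Hle. exact Hle.
Qed.

Lemma partial_le_series (a : nat -> R) N :
  (forall n, 0 <= a n) -> ex_series a -> sum_n a N <= Series a.
Proof.
  intros H He. apply Series_correct in He.
  apply (is_lim_seq_incr_compare (sum_n a) (Series a)).
  exact He. apply sumn_grow; auto.
Qed.


Definition lsum (f : Z -> R) (l : list Z) : R := fold_right (fun x acc => f x + acc) 0 l.

Fixpoint LZ (N : nat) : list Z :=
  match N with
  | O => 0%Z :: nil
  | S m => LZ m ++ ((Z.of_nat m + 1)%Z :: (- (Z.of_nat m + 1))%Z :: nil)
  end.

Lemma lsum_app f l1 l2 : lsum f (l1 ++ l2) = lsum f l1 + lsum f l2.
Proof. induction l1; simpl; [lra|]. rewrite IHl1; lra. Qed.

Lemma lsum_LZ f N : sum_n (zpair f) N = lsum f (LZ N).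
Proof.
  induction N.
  - rewrite sum_O. simpl. lra.
  - rewrite sumn_S, IHN. simpl LZ. rewrite lsum_app. simpl. lra.
Qed.

Lemma In_LZ x N : In x (LZ N) <-> (Z.abs x <= Z.of_nat N)%Z.
Proof.
  induction N; simpl.
  - split. intros [H|[]]; subst; simpl; lia. intros H; left; lia.
  - rewrite in_app_iff, IHN. simpl. split.
    + intros [H|[H|[H|[]]]]; lia.
    + intros H. destruct (Z_le_gt_dec (Z.abs x) (Z.of_nat N)). left; auto.
      right. destruct (Z_le_gt_dec 0 x). left; lia. right; left; lia.
Qed.

Lemma NoDup_LZ N : NoDup (LZ N).
Proof.
  induction N; simpl. constructor. simpl; auto. constructor.
  apply NoDup_app; auto.
  - constructor. simpl. lia. constructor. simpl; auto. constructor.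
  - intros x Hx Hy. apply In_LZ in Hx. simpl in Hy. lia.
Qed.

Lemma lsum_nonneg f l : (forall x, 0 <= f x) -> 0 <= lsum f l.
Proof. intros H; induction l; simpl; [lra|]. specialize (H a); lra. Qed.

Lemma lsum_incl f l l' : (forall x, 0 <= f x) -> NoDup l -> incl l l' -> lsum f l <= lsum f l'.
Proof.
  intros Hf Hl. revert l'. induction Hl as [|a l Ha Hl IH]; intros l' Hi.
  - simpl. apply lsum_nonneg; auto.
  - assert (Hin : In a l') by (apply Hi; left; auto).
    destruct (in_split _ _ Hin) as [l1 [l2 ->]].
    rewrite lsum_app. simpl.
    assert (lsum f l <= lsum f (l1 ++ l2)).
    { apply IH. intros y Hy. assert (Hy' := Hi y (or_intror Hy)).
      apply in_app_iff in Hy'. apply in_app_iff. destruct Hy' as [H|[H|H]]; auto.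
      subst; contradiction. }
    rewrite lsum_app in H. lra.
Qed.

Lemma incl_LZ l : exists N, incl l (LZ N).
Proof.
  induction l as [|a l [N HN]].
  - exists O. intros x [].
  - exists (Nat.max N (Z.to_nat (Z.abs a))). intros x [->|Hx]; apply In_LZ.
    + lia.
    + apply HN, In_LZ in Hx. lia.
Qed.

Lemma zpair_nonneg f n : (forall x, 0 <= f x) -> 0 <= zpair f n.
Proof. intros H. destruct n; simpl; [apply H|]. generalize (H (Z.of_nat n + 1)%Z)
  (H (- (Z.of_nat n + 1))%Z). lra. Qed.

Lemma key1 f l : (forall x, 0 <= f x) -> ex_series (zpair f) -> NoDup l -> lsum f l <= ZsumR f.
Proof.
  intros Hf He Hl. destruct (incl_LZ l) as [N HN].
  apply Rle_trans with (lsum f (LZ N)). apply lsum_incl; auto.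
  rewrite <- lsum_LZ. unfold ZsumR. apply partial_le_series; auto.
  intros; apply zpair_nonneg; auto.
Qed.

Lemma key2 f M : (forall x, 0 <= f x) -> (forall l, NoDup l -> lsum f l <= M) ->
  ex_series (zpair f) /\ ZsumR f <= M.
Proof.
  intros Hf HM. apply nonneg_series. intros; apply zpair_nonneg; auto.
  intros N. rewrite lsum_LZ. apply HM, NoDup_LZ.
Qed.

Lemma ZsumR_nonneg f : (forall x, 0 <= f x) -> ex_series (zpair f) -> 0 <= ZsumR f.
Proof. intros. apply Rle_trans with (lsum f nil). simpl; lra. apply key1; auto. constructor. Qed.

Lemma f_le_ZsumR f x : (forall x, 0 <= f x) -> ex_series (zpair f) -> f x <= ZsumR f.
Proof. intros. apply Rle_trans with (lsum f (x::nil)). simpl; lra. apply key1; auto.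
  constructor. simpl; auto. constructor. Qed.


Definition zs (f : Z -> R) := ex_series (zpair f).

Lemma zpair_ext f g n : (forall x, f x = g x) -> zpair f n = zpair g n.
Proof. intros H; destruct n; simpl; rewrite ?H; auto. Qed.

Lemma ZsumR_ext f g : (forall x, f x = g x) -> ZsumR f = ZsumR g.
Proof. intros H. unfold ZsumR. apply Series_ext. intros; apply zpair_ext; auto. Qed.

Lemma zs_ext f g : (forall x, f x = g x) -> zs f -> zs g.
Proof. intros H. unfold zs. apply ex_series_ext. intros; apply zpair_ext; auto. Qed.

Lemma ZsumR_plus f g : zs f -> zs g ->
  zs (fun k => f k + g k) /\ ZsumR (fun k => f k + g k) = ZsumR f + ZsumR g.
Proof.
  intros Hf Hg. unfold zs, ZsumR in *.
  assert (E : forall n, zpair (fun k => f k + g k) n = zpair f n + zpair g n).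
  { intros n; destruct n; simpl; ring. }
  split.
  - eapply ex_series_ext. intros n; symmetry; apply E.
    apply (ex_series_plus _ _ Hf Hg).
  - rewrite (Series_ext _ _ E). apply Series_plus; auto.
Qed.

Lemma ZsumR_scal c f : zs f -> zs (fun k => c * f k) /\ ZsumR (fun k => c * f k) = c * ZsumR f.
Proof.
  intros Hf. unfold zs, ZsumR in *.
  assert (E : forall n, zpair (fun k => c * f k) n = c * zpair f n).
  { intros n; destruct n; simpl; ring. }
  split.
  - eapply ex_series_ext. intros n; symmetry; apply E.
    apply (ex_series_scal_l c _ Hf).
  - rewrite (Series_ext _ _ E). apply Series_scal_l.
Qed.

Lemma lsum_le f g l : (forall x, f x <= g x) -> lsum f l <= lsum g l.
Proof. intros H; induction l; simpl; [lra|]. specialize (H a); lra. Qed.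

Lemma ZsumR_le f g : (forall x, 0 <= f x <= g x) -> zs g -> zs f /\ ZsumR f <= ZsumR g.
Proof.
  intros H Hg. apply key2. intros x; apply H.
  intros l Hl. apply Rle_trans with (lsum g l). apply lsum_le; intros; apply H.
  apply key1; auto. intros x; generalize (H x); lra.
Qed.

Lemma lsum_ZsumR (F : Z -> Z -> R) l : (forall i, zs (F i)) ->
  zs (fun k => lsum (fun i => F i k) l) /\
  ZsumR (fun k => lsum (fun i => F i k) l) = lsum (fun i => ZsumR (F i)) l.
Proof.
  intros HF. induction l as [|a l [IH1 IH2]]; simpl.
  - assert (Hk : zs (fun _ : Z => 0) /\ ZsumR (fun _ : Z => 0) <= 0).
    { apply key2. intros; lra. intros l0 _. induction l0; simpl; lra. }
    destruct Hk as [Hk1 Hk2]. split; auto.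
    generalize (ZsumR_nonneg (fun _ => 0) (fun _ => Rle_refl 0) Hk1). lra.
  - destruct (ZsumR_plus _ _ (HF a) IH1) as [H1 H2]. split; auto.
    rewrite H2, IH2. reflexivity.
Qed.

Lemma reindex f (phi : Z -> Z) : Injective phi -> (forall x, 0 <= f x) -> zs f ->
  zs (fun k => f (phi k)) /\ ZsumR (fun k => f (phi k)) <= ZsumR f.
Proof.
  intros Hi Hf Hz. apply key2. intros; apply Hf.
  intros l Hl. assert (E : lsum (fun k => f (phi k)) l = lsum f (map phi l)).
  { induction l; simpl; auto. rewrite IHl; auto. inversion Hl; auto. }
  rewrite E. apply key1; auto. apply Injective_map_NoDup; auto.
Qed.

Definition isum2 (F : Z -> Z -> R) := (forall k1, zs (F k1)) /\ zs (fun k1 => ZsumR (F k1)).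
Definition I2 (F : Z -> Z -> R) := ZsumR (fun k1 => ZsumR (F k1)).

Lemma isum2_le F G : (forall a b, 0 <= F a b <= G a b) -> isum2 G -> isum2 F /\ I2 F <= I2 G.
Proof.
  intros H [HG1 HG2].
  assert (Hin : forall a, zs (F a) /\ ZsumR (F a) <= ZsumR (G a)).
  { intros a. apply ZsumR_le; auto. }
  assert (Hout : zs (fun k1 => ZsumR (F k1)) /\ ZsumR (fun k1 => ZsumR (F k1)) <= ZsumR (fun k1 => ZsumR (G k1))).
  { apply ZsumR_le; auto. intros x. split. apply ZsumR_nonneg. intros; apply H. apply Hin.
    apply Hin. }
  split. split. intros; apply Hin. apply Hout. apply Hout.
Qed.

Lemma isum2_plus F G : isum2 F -> isum2 G -> isum2 (fun a b => F a b + G a b) /\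
  I2 (fun a b => F a b + G a b) = I2 F + I2 G.
Proof.
  intros [F1 F2] [G1 G2].
  assert (Hin : forall a, zs (fun b => F a b + G a b) /\ ZsumR (fun b => F a b + G a b) = ZsumR (F a) + ZsumR (G a)).
  { intros a; apply ZsumR_plus; auto. }
  destruct (ZsumR_plus _ _ F2 G2) as [H1 H2].
  split. split. intros; apply Hin. eapply zs_ext; [|exact H1]. intros x; simpl. symmetry; apply Hin.
  unfold I2. rewrite <- H2. apply ZsumR_ext. intros; apply Hin.
Qed.

Lemma isum2_scal c F : isum2 F -> isum2 (fun a b => c * F a b) /\ I2 (fun a b => c * F a b) = c * I2 F.
Proof.
  intros [F1 F2].
  assert (Hin : forall a, zs (fun b => c * F a b) /\ ZsumR (fun b => c * F a b) = c * ZsumR (F a)).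
  { intros a; apply ZsumR_scal; auto. }
  destruct (ZsumR_scal c _ F2) as [H1 H2].
  split. split. intros; apply Hin. eapply zs_ext; [|exact H1]. intros x; simpl. symmetry; apply Hin.
  unfold I2. rewrite <- H2. apply ZsumR_ext. intros; apply Hin.
Qed.

Lemma tonelli F : (forall a b, 0 <= F a b) -> (forall k1, zs (F k1)) ->
  (forall k2, zs (fun k1 => F k1 k2)) -> zs (fun k2 => ZsumR (fun k1 => F k1 k2)) ->
  isum2 F /\ I2 F <= ZsumR (fun k2 => ZsumR (fun k1 => F k1 k2)).
Proof.
  intros H0 H1 H2 H3.
  assert (K : zs (fun k1 => ZsumR (F k1)) /\ ZsumR (fun k1 => ZsumR (F k1)) <= ZsumR (fun k2 => ZsumR (fun k1 => F k1 k2))).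
  { apply key2. intros; apply ZsumR_nonneg. intros; apply H0. apply H1.
    intros l Hl. destruct (lsum_ZsumR F l H1) as [E1 E2]. rewrite <- E2.
    eapply proj2. apply ZsumR_le; auto. intros x. split.
    + apply lsum_nonneg. intros; apply H0.
    + apply key1. intros; apply H0. apply H2. exact Hl. }
  split. split; auto. apply K. apply K.
Qed.


Lemma ZsumR_le_gen f g : (forall x, f x <= g x) -> zs f -> zs g -> ZsumR f <= ZsumR g.
Proof.
  intros H Hf Hg.
  destruct (ZsumR_scal (-1) f Hf) as [H1 H2].
  destruct (ZsumR_plus _ _ Hg H1) as [H3 H4].
  assert (0 <= ZsumR (fun k => g k + -1 * f k)).
  { apply ZsumR_nonneg; auto. intros x; specialize (H x); lra. }
  lra.
Qed.


Lemma zs_dom f g : (forall x, Rabs (f x) <= g x) -> zs g -> zs f.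
Proof.
  intros H Hg. unfold zs in *. apply (@ex_series_le R_AbsRing R_CompleteNormedModule (zpair f) (zpair g)); [|exact Hg].
  intros n. change (norm (zpair f n)) with (Rabs (zpair f n)).
  destruct n; simpl. apply H.
  eapply Rle_trans. apply Rabs_triang. apply Rplus_le_compat; apply H.
Qed.

Lemma im_le_Cmod c : Rabs (Im c) <= Cmod c.
Proof.
  rewrite <- sqrt_Rsqr_abs. unfold Cmod. apply sqrt_le_1_alt. unfold Rsqr, Im. simpl.
  generalize (fst c) (snd c); intros; nra.
Qed.

Lemma cs2 A B x y : A * x + B * y <= sqrt (A^2 + B^2) * sqrt (x^2 + y^2).
Proof.
  assert (0 <= A^2+B^2) by (generalize (pow2_ge_0 A) (pow2_ge_0 B); lra).
  assert (0 <= x^2+y^2) by (generalize (pow2_ge_0 x) (pow2_ge_0 y); lra).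
  rewrite <- sqrt_mult by lra.
  destruct (Rle_dec (A*x+B*y) 0). apply Rle_trans with 0; auto. apply sqrt_pos.
  rewrite <- (sqrt_pow2 (A*x+B*y)) by lra. apply sqrt_le_1_alt.
  assert (0 <= (A*y - B*x)^2) by apply pow2_ge_0.
  replace ((A ^ 2 + B ^ 2) * (x ^ 2 + y ^ 2)) with ((A*x+B*y)^2 + (A*y - B*x)^2) by ring. lra.
Qed.

Lemma Zsum_bound f : zsummable f -> Cmod (Zsum f) <= ZsumR (fun k => Cmod (f k)).
Proof.
  intros Hf. change (zs (fun k => Cmod (f k))) in Hf.
  assert (Hre : zs (fun k => Re (f k))). { eapply zs_dom; [|exact Hf]. intros; apply re_le_Cmod. }
  assert (Him : zs (fun k => Im (f k))). { eapply zs_dom; [|exact Hf]. intros; apply im_le_Cmod. }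
  set (A := ZsumR (fun k => Re (f k))). set (B := ZsumR (fun k => Im (f k))).
  assert (HS : Cmod (Zsum f) = sqrt (A^2 + B^2)) by reflexivity.
  destruct (ZsumR_scal A _ Hre) as [a1 a2]. destruct (ZsumR_scal B _ Him) as [b1 b2].
  destruct (ZsumR_plus _ _ a1 b1) as [c1 c2].
  destruct (ZsumR_scal (sqrt (A^2+B^2)) _ Hf) as [d1 d2].
  assert (Hle : ZsumR (fun k => A * Re (f k) + B * Im (f k)) <= ZsumR (fun k => sqrt (A^2+B^2) * Cmod (f k))).
  { apply ZsumR_le_gen; auto. intros x. apply cs2. }
  rewrite c2, a2, b2, d2 in Hle. fold A in Hle. fold B in Hle.
  rewrite HS. set (T := ZsumR (fun k => Cmod (f k))) in *.
  assert (HT : 0 <= T) by (apply ZsumR_nonneg; auto; intros; apply Cmod_ge_0).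
  assert (E : A * A + B * B = sqrt (A^2+B^2) * sqrt (A^2+B^2)).
  { rewrite sqrt_sqrt by nra. ring. }
  assert (0 <= sqrt (A^2+B^2)) by apply sqrt_pos.
  destruct (Rle_lt_or_eq_dec 0 (sqrt (A^2+B^2)) H); [|lra]. nra.
Qed.


Definition g (n : Z) : R := / ((IZR (Z.abs n) + 1) * (IZR (Z.abs n) + 2)).

Lemma IZR_abs_nonneg n : 0 <= IZR (Z.abs n).
Proof. apply IZR_le; lia. Qed.

Lemma g_pos n : 0 < g n.
Proof. unfold g. generalize (IZR_abs_nonneg n); intros. apply Rinv_0_lt_compat; nra. Qed.

Lemma abs_succ m : IZR (Z.abs (Z.of_nat m + 1)) = INR m + 1 /\ IZR (Z.abs (- (Z.of_nat m + 1))) = INR m + 1.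
Proof.
  rewrite INR_IZR_INZ. split.
  - replace (Z.abs (Z.of_nat m + 1)) with (Z.of_nat m + 1)%Z by lia. rewrite plus_IZR; auto.
  - replace (Z.abs (- (Z.of_nat m + 1))) with (Z.of_nat m + 1)%Z by lia. rewrite plus_IZR; auto.
Qed.

Lemma g_partial N : @eq R (sum_n (zpair g) N) (3/2 - 2 / (INR N + 2)).
Proof.
  assert (HN : forall n, 0 <= INR n) by apply pos_INR.
  induction N.
  - rewrite sum_O. simpl. unfold g. simpl. field.
  - rewrite sumn_S, IHN. simpl zpair. destruct (abs_succ N) as [E1 E2]. unfold g.
    rewrite E1, E2. rewrite S_INR. specialize (HN N). set (x := INR N) in *. field_simplify_eq. ring. repeat split; lra.
Qed.

Lemma g_sum : zs g /\ ZsumR g <= 3/2.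
Proof.
  apply nonneg_series. intros; apply zpair_nonneg. intros; left; apply g_pos.
  intros N. rewrite g_partial. assert (0 < 2 / (INR N + 2)).
  { generalize (pos_INR N); intros. apply Rdiv_lt_0_compat; lra. } lra.
Qed.

Lemma inv_sq_g n : n <> 0%Z -> / (IZR n)^2 <= 6 * g n.
Proof.
  intros Hn. unfold g.
  assert (Ha : 1 <= IZR (Z.abs n)) by (apply IZR_le; lia).
  assert (E : (IZR n)^2 = (IZR (Z.abs n))^2).
  { rewrite abs_IZR. rewrite pow2_abs. reflexivity. }
  rewrite E. set (a := IZR (Z.abs n)) in *.
  rewrite <- (Rmult_1_l (/ ((a+1)*(a+2)))). rewrite <- Rmult_assoc, Rmult_1_r.
  apply Rle_trans with (6 / ((a+1)*(a+2))); [|unfold Rdiv; lra].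
  apply Rle_trans with (1 / a^2). unfold Rdiv; lra.
  apply Rmult_le_reg_r with (a^2 * ((a+1)*(a+2))). nra.
  unfold Rdiv. field_simplify; try nra.
Qed.


Lemma Mbound (x1 a b c k : R) : x1 <> 0 -> a <> 0 -> b <> 0 -> c <> 0 ->
  2 * x1 = a - b + c -> k = x1 + b ->
  k^2 / Rabs (x1 * (a * b * c)) <=
  1 / Rabs (b*c) + 5 / Rabs (a*c) + 1 / Rabs (a*b) + 2 / Rabs (x1*c) + 2 / Rabs (x1*a).
Proof.
  intros H1 Ha Hb Hc E1 E2.
  rewrite !Rabs_mult.
  assert (P1 : 0 < Rabs x1) by (apply Rabs_pos_lt; auto).
  assert (Pa : 0 < Rabs a) by (apply Rabs_pos_lt; auto).
  assert (Pb : 0 < Rabs b) by (apply Rabs_pos_lt; auto).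
  assert (Pc : 0 < Rabs c) by (apply Rabs_pos_lt; auto).
  assert (Hk : Rabs k <= Rabs x1 + Rabs b) by (rewrite E2; apply Rabs_triang).
  assert (Hx : 2 * Rabs x1 <= Rabs a + Rabs b + Rabs c).
  { replace (2 * Rabs x1) with (Rabs (2*x1)) by (rewrite Rabs_mult, Rabs_pos_eq; lra).
    rewrite E1. unfold Rminus. eapply Rle_trans. apply Rabs_triang.
    generalize (Rabs_triang a (-b)); rewrite Rabs_Ropp. lra. }
  assert (Hb2 : Rabs b <= Rabs a + Rabs c + 2 * Rabs x1).
  { replace b with (a + c - 2 * x1) by lra. unfold Rminus.
    eapply Rle_trans. apply Rabs_triang. rewrite Rabs_Ropp, Rabs_mult, (Rabs_pos_eq 2) by lra.
    generalize (Rabs_triang a c). lra. }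
  assert (Ek : k^2 = Rabs k ^ 2) by (rewrite pow2_abs; auto).
  rewrite Ek.
  set (K1 := Rabs x1) in *. set (A := Rabs a) in *. set (B := Rabs b) in *. set (C := Rabs c) in *.
  set (K := Rabs k) in *.
  assert (K0 : 0 <= K) by apply Rabs_pos.
  assert (HN : K^2 <= K1*A + 5*K1*B + K1*C + 2*A*B + 2*B*C).
  { assert (Q1 : K*K <= (K1+B)*(K1+B)) by (apply Rmult_le_compat; lra).
    assert (Q2 : 0 <= (K1 - B)*(K1-B)) by apply Rle_0_sqr.
    assert (Q3 : 2*K1*K1 <= K1*(A+B+C)) by nra.
    assert (Q4 : 2*B*B <= 2*B*(A+C+2*K1)) by nra.
    replace (K^2) with (K*K) by ring. nra. }
  replace (1 / (B * C) + 5 / (A * C) + 1 / (A * B) + 2 / (K1 * C) + 2 / (K1 * A))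
    with ((K1*A + 5*K1*B + K1*C + 2*A*B + 2*B*C) / (K1 * (A * B * C))) by (field; lra).
  unfold Rdiv. apply Rmult_le_compat_r; auto.
  left. apply Rinv_0_lt_compat. repeat apply Rmult_lt_0_compat; auto.
Qed.

Lemma cs5 t1 t2 t3 t4 t5 : (t1+t2+t3+t4+t5)^2 <= 5*(t1^2+t2^2+t3^2+t4^2+t5^2).
Proof.
  assert (0 <= (t1-t2)^2) by apply pow2_ge_0. assert (0 <= (t1-t3)^2) by apply pow2_ge_0.
  assert (0 <= (t1-t4)^2) by apply pow2_ge_0. assert (0 <= (t1-t5)^2) by apply pow2_ge_0.
  assert (0 <= (t2-t3)^2) by apply pow2_ge_0. assert (0 <= (t2-t4)^2) by apply pow2_ge_0.
  assert (0 <= (t2-t5)^2) by apply pow2_ge_0. assert (0 <= (t3-t4)^2) by apply pow2_ge_0.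
  assert (0 <= (t3-t5)^2) by apply pow2_ge_0. assert (0 <= (t4-t5)^2) by apply pow2_ge_0.
  nra.
Qed.

Lemma pair_sq (x y : Z) (cc : R) : (x <> 0)%Z -> (y <> 0)%Z -> 0 <= cc -> cc <= 5 ->
  (cc / Rabs (IZR x * IZR y))^2 <= 25 * 36 * (g x * g y).
Proof.
  intros Hx Hy H0 H5.
  assert (Ix : IZR x <> 0) by (apply not_0_IZR; auto).
  assert (Iy : IZR y <> 0) by (apply not_0_IZR; auto).
  assert (gx := inv_sq_g x Hx). assert (gy := inv_sq_g y Hy).
  assert (E : (cc / Rabs (IZR x * IZR y))^2 = cc^2 * (/ (IZR x)^2 * / (IZR y)^2)).
  { unfold Rdiv. rewrite Rpow_mult_distr, pow_inv, pow2_abs. field. split; auto. }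
  rewrite E.
  assert (0 < / IZR x ^ 2) by (apply Rinv_0_lt_compat; apply pow2_gt_0; auto).
  assert (0 < / IZR y ^ 2) by (apply Rinv_0_lt_compat; apply pow2_gt_0; auto).
  assert (cc^2 <= 25) by nra.
  assert (0 <= cc^2) by apply pow2_ge_0.
  apply Rle_trans with (25 * (/ IZR x ^ 2 * / IZR y ^ 2)).
  apply Rmult_le_compat_r; nra.
  assert (/ IZR x ^ 2 * / IZR y ^ 2 <= 36 * (g x * g y)).
  { replace (36 * (g x * g y)) with ((6 * g x) * (6 * g y)) by ring.
    apply Rmult_le_compat; lra. }
  lra.
Qed.

Definition Mfun (k k1 k2 : Z) : R :=
  let k3 := (k - k1 - k2)%Z in
  let p := ((k1 + k2) * (k2 + k3) * (k3 + k1))%Z in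
  if (Z.eqb k1 0 || Z.eqb k2 0 || Z.eqb k3 0 || Z.eqb p 0)%bool then 0
  else IZR k ^ 2 / Rabs (IZR (k1 * p)).

Definition Pfun (k k1 k2 : Z) : R :=
  4500 * (g (k - k1) * g (k - k2) + g (k1 + k2) * g (k - k2) + g (k1 + k2) * g (k - k1)
          + g k1 * g (k - k2) + g k1 * g (k1 + k2)).

Lemma Pfun_nonneg k k1 k2 : 0 <= Pfun k k1 k2.
Proof.
  unfold Pfun. repeat match goal with |- context [g ?x] =>
    let h := fresh in assert (h := g_pos x); revert h; generalize (g x) end.
  intros; nra.
Qed.

Lemma Msq k k1 k2 : (Mfun k k1 k2)^2 <= Pfun k k1 k2.
Proof.
  unfold Mfun. cbv zeta.
  destruct (Z.eqb_spec k1 0); destruct (Z.eqb_spec k2 0); destruct (Z.eqb_spec (k-k1-k2) 0);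
  destruct (Z.eqb_spec ((k1 + k2) * (k2 + (k - k1 - k2)) * (k - k1 - k2 + k1)) 0); cbn [orb];
  try (generalize (Pfun_nonneg k k1 k2); lra).
  assert (Ha : (k1 + k2 <> 0)%Z) by (intro; apply n2; rewrite H; ring).
  assert (Hb : (k - k1 <> 0)%Z) by (intro; apply n2; replace (k2 + (k - k1 - k2))%Z with (k-k1)%Z by ring; rewrite H; ring).
  assert (Hc : (k - k2 <> 0)%Z) by (intro; apply n2; replace (k - k1 - k2 + k1)%Z with (k-k2)%Z by ring; rewrite H; ring).
  replace ((k1 + k2) * (k2 + (k - k1 - k2)) * (k - k1 - k2 + k1))%Z with ((k1+k2)*(k-k1)*(k-k2))%Z by ring.
  rewrite !mult_IZR.
  assert (HM := Mbound (IZR k1) (IZR (k1+k2)) (IZR (k-k1)) (IZR (k-k2)) (IZR k)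
     (not_0_IZR _ n) (not_0_IZR _ Ha) (not_0_IZR _ Hb) (not_0_IZR _ Hc)).
  rewrite !plus_IZR, !minus_IZR in HM. specialize (HM ltac:(ring) ltac:(ring)).
  rewrite <- !plus_IZR, <- !minus_IZR in HM.
  assert (0 <= IZR k ^ 2 / Rabs (IZR k1 * (IZR (k1 + k2) * IZR (k - k1) * IZR (k - k2)))).
  { apply Rmult_le_pos. apply pow2_ge_0. left; apply Rinv_0_lt_compat, Rabs_pos_lt.
    repeat apply Rmult_integral_contrapositive_currified; apply not_0_IZR; auto. }
  eapply Rle_trans. apply pow_incr. split; [exact H|exact HM].
  eapply Rle_trans. apply cs5.
  assert (T1 := pair_sq (k-k1) (k-k2) 1 Hb Hc ltac:(lra) ltac:(lra)).
  assert (T2 := pair_sq (k1+k2) (k-k2) 5 Ha Hc ltac:(lra) ltac:(lra)).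
  assert (T3 := pair_sq (k1+k2) (k-k1) 1 Ha Hb ltac:(lra) ltac:(lra)).
  assert (T4 := pair_sq k1 (k-k2) 2 n Hc ltac:(lra) ltac:(lra)).
  assert (T5 := pair_sq k1 (k1+k2) 2 n Ha ltac:(lra) ltac:(lra)).
  unfold Pfun. lra.
Qed.


Lemma g_nonneg x : 0 <= g x. Proof. left; apply g_pos. Qed.

Lemma gs_shift c : zs (fun x => g (c + x)) /\ ZsumR (fun x => g (c + x)) <= 3/2.
Proof.
  destruct (reindex g (fun x => (c + x)%Z)) as [H1 H2].
  intros x y E; lia. apply g_nonneg. apply g_sum.
  split; auto. generalize (proj2 g_sum); lra.
Qed.

Lemma gs_refl c : zs (fun x => g (c - x)) /\ ZsumR (fun x => g (c - x)) <= 3/2.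
Proof.
  destruct (reindex g (fun x => (c - x)%Z)) as [H1 H2].
  intros x y E; lia. apply g_nonneg. apply g_sum.
  split; auto. generalize (proj2 g_sum); lra.
Qed.

Lemma prodlemma (F : Z -> Z -> R) (al : Z -> R) (be : Z -> Z -> R) Ad Bd :
  (forall a b, F a b = al a * be a b) -> (forall a, 0 <= al a) -> (forall a b, 0 <= be a b) ->
  zs al -> ZsumR al <= Ad -> (forall a, zs (be a)) -> (forall a, ZsumR (be a) <= Bd) -> 0 <= Bd ->
  isum2 F /\ I2 F <= Ad * Bd.
Proof.
  intros HF Ha Hb Hal HAd Hbe HBd HB0.
  assert (Hin : forall a, zs (F a) /\ ZsumR (F a) = al a * ZsumR (be a)).
  { intros a. destruct (ZsumR_scal (al a) _ (Hbe a)) as [h1 h2]. split.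
    eapply zs_ext; [|exact h1]. intros; simpl; auto.
    rewrite <- h2. apply ZsumR_ext; auto. }
  destruct (ZsumR_scal Bd _ Hal) as [h1 h2].
  assert (Hout : zs (fun a => ZsumR (F a)) /\ ZsumR (fun a => ZsumR (F a)) <= ZsumR (fun a => Bd * al a)).
  { apply ZsumR_le; auto. intros x. rewrite (proj2 (Hin x)). split.
    apply Rmult_le_pos; auto. apply ZsumR_nonneg; auto.
    apply Hbe. rewrite (Rmult_comm Bd). apply Rmult_le_compat_l; auto. }
  split. split; auto. intros; apply Hin. apply Hout.
  unfold I2. eapply Rle_trans. apply Hout. rewrite h2. rewrite Rmult_comm.
  apply Rmult_le_compat_r; auto.
Qed.

Definition G2 := (3/2) * (3/2).

Lemma piece1 k : isum2 (fun k1 k2 => g (k - k1) * g (k - k2)) /\ I2 (fun k1 k2 => g (k - k1) * g (k - k2)) <= G2.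
Proof. apply (prodlemma _ (fun a => g (k - a)) (fun _ b => g (k - b))); auto; intros; try apply g_nonneg;
  try apply gs_refl; try lra. Qed.

Lemma piece3 k : isum2 (fun k1 k2 => g (k1 + k2) * g (k - k1)) /\ I2 (fun k1 k2 => g (k1 + k2) * g (k - k1)) <= G2.
Proof. apply (prodlemma _ (fun a => g (k - a)) (fun a b => g (a + b))); auto; intros; try apply g_nonneg;
  try apply gs_refl; try apply gs_shift; try lra; try ring. Qed.

Lemma piece4 k : isum2 (fun k1 k2 => g k1 * g (k - k2)) /\ I2 (fun k1 k2 => g k1 * g (k - k2)) <= G2.
Proof. apply (prodlemma _ g (fun _ b => g (k - b))); auto; intros; try apply g_nonneg;
  try apply g_sum; try apply gs_refl; try lra. Qed.

Lemma piece5 (k : Z) : isum2 (fun k1 k2 => g k1 * g (k1 + k2)) /\ I2 (fun k1 k2 => g k1 * g (k1 + k2)) <= G2.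
Proof. apply (prodlemma _ g (fun a b => g (a + b))); auto; intros; try apply g_nonneg;
  try apply g_sum; try apply gs_shift; try lra. Qed.

Lemma piece2 k : isum2 (fun k1 k2 => g (k1 + k2) * g (k - k2)) /\ I2 (fun k1 k2 => g (k1 + k2) * g (k - k2)) <= G2.
Proof.
  assert (Hs : isum2 (fun k2 k1 => g (k - k2) * g (k1 + k2)) /\ I2 (fun k2 k1 => g (k - k2) * g (k1 + k2)) <= G2).
  { apply (prodlemma _ (fun a => g (k - a)) (fun a b => g (b + a))); auto; intros; try apply g_nonneg;
    try apply gs_refl; try lra.
    - eapply zs_ext; [|apply (gs_shift a)]. intros; simpl. f_equal; ring.
    - rewrite (ZsumR_ext _ (fun x => g (a + x))). apply gs_shift. intros; f_equal; ring. }
  destruct Hs as [[Hs1 Hs2] Hs3].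
  assert (gle : forall x, g x <= 1/2).
  { intros x. unfold g. generalize (IZR_abs_nonneg x); intros.
    unfold Rdiv; rewrite Rmult_1_l. apply Rinv_le_contravar. lra. nra. }
  destruct (tonelli (fun k1 k2 => g (k1 + k2) * g (k - k2))) as [T1 T2].
  - intros; apply Rmult_le_pos; apply g_nonneg.
  - intros k1. destruct (ZsumR_scal (1/2) _ (proj1 (gs_refl k))) as [h1 _].
    apply (proj1 (ZsumR_le _ _ (fun x => conj (Rmult_le_pos _ _ (g_nonneg _) (g_nonneg _))
       (Rmult_le_compat_r _ _ _ (g_nonneg _) (gle _))) h1)).
  - intros k2. eapply zs_ext; [|apply (Hs1 k2)]. intros; simpl; ring.
  - eapply zs_ext; [|apply Hs2]. intros; simpl. apply ZsumR_ext; intros; ring.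
  - split; auto. eapply Rle_trans. apply T2. eapply Rle_trans; [|apply Hs3].
    right. unfold I2. apply ZsumR_ext; intros; apply ZsumR_ext; intros; ring.
Qed.

Definition S0 := 4500 * (5 * G2).

Lemma Pfun_isum k : isum2 (Pfun k) /\ I2 (Pfun k) <= S0.
Proof.
  destruct (piece1 k) as [a1 b1]. destruct (piece2 k) as [a2 b2]. destruct (piece3 k) as [a3 b3].
  destruct (piece4 k) as [a4 b4]. destruct (piece5 k) as [a5 b5].
  destruct (isum2_plus _ _ a1 a2) as [c1 d1].
  destruct (isum2_plus _ _ c1 a3) as [c2 d2].
  destruct (isum2_plus _ _ c2 a4) as [c3 d3].
  destruct (isum2_plus _ _ c3 a5) as [c4 d4].
  destruct (isum2_scal 4500 _ c4) as [c5 d5].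
  destruct (isum2_le (Pfun k) _ (fun a b => conj (Pfun_nonneg k a b) (Rle_refl _)) c5) as [e1 e2].
  split; auto. eapply Rle_trans. exact e2. unfold Pfun. rewrite d5, d4, d3, d2, d1. unfold S0. lra.
Qed.


Lemma Rpower_pos x y : 0 < Rpower x y.
Proof. unfold Rpower. apply exp_pos. Qed.

Lemma Rpower_ge1 x y : 1 <= x -> 0 <= y -> 1 <= Rpower x y.
Proof. intros. rewrite <- (Rpower_O x) by lra. apply Rle_Rpower; auto. Qed.

Lemma IZR_abs_ge1 j : j <> 0%Z -> 1 <= IZR (Z.abs j).
Proof. intros; apply IZR_le; lia. Qed.

Definition Uf (s : R) (u : seqZ) (j : Z) : R :=
  if Z.eqb j 0 then 0 else Rpower (IZR (Z.abs j)) s * Cmod (u j).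

Lemma Uf_nonneg s u j : 0 <= Uf s u j.
Proof. unfold Uf. destruct (Z.eqb j 0). lra. apply Rmult_le_pos. left; apply Rpower_pos. apply Cmod_ge_0. Qed.

Lemma Uf_sq s u j : (Uf s u j)^2 = Hdot_term s u j.
Proof.
  unfold Uf, Hdot_term. destruct (Z.eqb j 0). ring.
  replace (2 * s) with (s + s) by ring. rewrite Rpower_plus. ring.
Qed.

Lemma Uf_ge s u j : 0 <= s -> j <> 0%Z -> Cmod (u j) <= Uf s u j.
Proof.
  intros hs hj. unfold Uf. apply Z.eqb_neq in hj. rewrite hj.
  assert (1 <= Rpower (IZR (Z.abs j)) s). { apply Rpower_ge1; auto. apply IZR_abs_ge1. lia. }
  generalize (Cmod_ge_0 (u j)). nra.
Qed.

Lemma Hdot_nonneg s u j : 0 <= Hdot_term s u j.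
Proof. rewrite <- Uf_sq. apply pow2_ge_0. Qed.

Lemma Cmod_cexpi th : Cmod (cexpi th) = 1.
Proof. unfold Cmod, cexpi. simpl. replace (cos th * (cos th * 1) + sin th * (sin th * 1)) with 1. apply sqrt_1. generalize (sin2_cos2 th); unfold Rsqr; intro H. rewrite !Rmult_1_r. lra. Qed.

Definition Tcm t u v w k k1 k2 := Cmod (B3_term t u v w k k1 k2).

Lemma Tcm_form t u v w k k1 k2 :
  Tcm t u v w k k1 k2 =
  (let k3 := (k - k1 - k2)%Z in
  let p := ((k1 + k2) * (k2 + k3) * (k3 + k1))%Z in
  if (Z.eqb k1 0 || Z.eqb k2 0 || Z.eqb k3 0 || Z.eqb p 0)%bool then 0
  else Cmod (u k1) * (Cmod (v k2) * Cmod (w k3)) / Rabs (IZR (k1 * p))).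
Proof.
  unfold Tcm, B3_term. cbv zeta.
  destruct (Z.eqb k1 0 || Z.eqb k2 0 || Z.eqb (k - k1 - k2) 0 || Z.eqb ((k1 + k2) * (k2 + (k - k1 - k2)) * (k - k1 - k2 + k1)) 0)%bool eqn:Ed.
  - rewrite Cmod_0. reflexivity.
  - repeat rewrite Bool.orb_false_iff in Ed. destruct Ed as [[[E1 E2] E3] E4].
    apply Z.eqb_neq in E1. apply Z.eqb_neq in E4.
    assert (Hd : IZR (k1 * ((k1 + k2) * (k2 + (k - k1 - k2)) * (k - k1 - k2 + k1))) <> 0).
    { apply not_0_IZR. apply Z.neq_mul_0; auto. }
    rewrite Cmod_mult, Cmod_div, Cmod_cexpi, !Cmod_mult, Cmod_R.
    unfold Rdiv. ring.
    intro H. apply Hd. apply (f_equal fst) in H. simpl in H. exact H.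
Qed.


Definition Ud s u j := (Hdot_term s u j + 6 * g j) / 2.

Lemma D_ge k1 p : p <> 0%Z -> Rabs (IZR k1) <= Rabs (IZR (k1 * p)).
Proof.
  intros Hp. rewrite mult_IZR, Rabs_mult.
  assert (1 <= Rabs (IZR p)). { rewrite <- abs_IZR. apply IZR_abs_ge1; auto. }
  generalize (Rabs_pos (IZR k1)). nra.
Qed.

Lemma Tcm_sumbound s t u v w k k1 k2 : 0 <= s ->
  Tcm t u v w k k1 k2 <= Ud s u k1 * (Uf s v k2 * Uf s w (k - k1 - k2)).
Proof.
  intros hs. rewrite Tcm_form. cbv zeta.
  destruct (Z.eqb_spec k1 0); destruct (Z.eqb_spec k2 0); destruct (Z.eqb_spec (k-k1-k2) 0);
  destruct (Z.eqb_spec ((k1 + k2) * (k2 + (k - k1 - k2)) * (k - k1 - k2 + k1)) 0); cbn [orb];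
  try (apply Rmult_le_pos; [unfold Ud; generalize (Hdot_nonneg s u k1) (g_nonneg k1); lra|
        apply Rmult_le_pos; apply Uf_nonneg]).
  set (p := ((k1 + k2) * (k2 + (k - k1 - k2)) * (k - k1 - k2 + k1))%Z) in *.
  set (D := Rabs (IZR (k1 * p))).
  assert (HD := D_ge k1 p n2). fold D in HD.
  assert (Ha : 1 <= Rabs (IZR k1)) by (rewrite <- abs_IZR; apply IZR_abs_ge1; auto).
  set (a := Rabs (IZR k1)) in *.
  assert (Hu := Uf_ge s u k1 hs n). assert (Hv := Uf_ge s v k2 hs n0). assert (Hw := Uf_ge s w _ hs n1).
  assert (H0u := Cmod_ge_0 (u k1)). assert (H0v := Cmod_ge_0 (v k2)). assert (H0w := Cmod_ge_0 (w (k-k1-k2)%Z)).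
  set (U := Uf s u k1) in *. set (V := Uf s v k2) in *. set (W := Uf s w (k-k1-k2)) in *.
  assert (HVW : Cmod (v k2) * Cmod (w (k - k1 - k2)%Z) <= V * W) by (apply Rmult_le_compat; auto).
  assert (H0VW : 0 <= Cmod (v k2) * Cmod (w (k - k1 - k2)%Z)) by (apply Rmult_le_pos; auto).
  assert (Step1 : Cmod (u k1) * (Cmod (v k2) * Cmod (w (k - k1 - k2)%Z)) / D <= (U / a) * (V * W)).
  { unfold Rdiv. rewrite Rmult_comm, <- Rmult_assoc.
    replace (U * / a * (V * W)) with (/ a * U * (V * W)) by ring.
    apply Rmult_le_compat.
    - apply Rmult_le_pos; auto. left; apply Rinv_0_lt_compat; lra.
    - auto.
    - apply Rmult_le_compat; auto. left; apply Rinv_0_lt_compat; lra. apply Rinv_le_contravar; lra.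
    - auto. }
  assert (Hg := inv_sq_g k1 n).
  assert (Ea : (IZR k1)^2 = a^2) by (unfold a; rewrite pow2_abs; auto).
  rewrite Ea in Hg.
  assert (AM : U / a <= (U^2 + / a^2) / 2).
  { assert (0 <= (U - / a)^2) by apply pow2_ge_0.
    replace (/ a^2) with ((/a)^2) by (rewrite pow_inv; auto).
    unfold Rdiv. nra. }
  assert (0 <= V * W) by (apply Rmult_le_pos; apply Uf_nonneg).
  eapply Rle_trans. exact Step1. apply Rmult_le_compat_r; auto.
  unfold Ud. rewrite <- Uf_sq. fold U. lra.
Qed.

Lemma Rpower_split s k k1 k2 : 0 <= s -> k1 <> 0%Z -> k2 <> 0%Z -> (k - k1 - k2)%Z <> 0%Z -> k <> 0%Z ->
  Rpower (IZR (Z.abs k)) s <= Rpower 3 s * (Rpower (IZR (Z.abs k1)) s * (Rpower (IZR (Z.abs k2)) s * Rpower (IZR (Z.abs (k - k1 - k2))) s)).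
Proof.
  intros hs h1 h2 h3 h0.
  assert (a1 := IZR_abs_ge1 _ h1). assert (a2 := IZR_abs_ge1 _ h2). assert (a3 := IZR_abs_ge1 _ h3).
  assert (a0 := IZR_abs_ge1 _ h0).
  assert (Hk : IZR (Z.abs k) <= IZR (Z.abs k1) + IZR (Z.abs k2) + IZR (Z.abs (k - k1 - k2))).
  { rewrite <- !plus_IZR. apply IZR_le. lia. }
  rewrite !Rpower_mult_distr by (repeat apply Rmult_lt_0_compat; lra).
  apply Rle_Rpower_l; auto. split. lra.
  set (x := IZR (Z.abs k1)) in *. set (y := IZR (Z.abs k2)) in *. set (z := IZR (Z.abs (k - k1 - k2))) in *.
  assert (x + y + z <= 3 * (x * (y * z))).
  { assert (1 <= y*z) by nra. assert (x <= x * (y*z)) by nra. assert (y <= y * z) by nra.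
    assert (y*z <= x*(y*z)) by nra. assert (z <= y*z) by nra. nra. }
  lra.
Qed.

Lemma Tcm_main s t u v w k k1 k2 : 0 <= s -> k <> 0%Z ->
  Rpower (IZR (Z.abs k)) (s + 2) * Tcm t u v w k k1 k2 <=
  Rpower 3 s * (Mfun k k1 k2 * (Uf s u k1 * (Uf s v k2 * Uf s w (k - k1 - k2)))).
Proof.
  intros hs hk. rewrite Tcm_form. unfold Mfun. cbv zeta.
  destruct (Z.eqb_spec k1 0); destruct (Z.eqb_spec k2 0); destruct (Z.eqb_spec (k-k1-k2) 0);
  destruct (Z.eqb_spec ((k1 + k2) * (k2 + (k - k1 - k2)) * (k - k1 - k2 + k1)) 0); cbn [orb];
  try (rewrite !Rmult_0_l, !Rmult_0_r; lra).
  set (p := ((k1 + k2) * (k2 + (k - k1 - k2)) * (k - k1 - k2 + k1))%Z) in *.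
  set (D := Rabs (IZR (k1 * p))).
  assert (HD0 : 0 < D). { unfold D. apply Rabs_pos_lt, not_0_IZR. apply Z.neq_mul_0; auto. }
  unfold Uf. rewrite (proj2 (Z.eqb_neq _ _) n), (proj2 (Z.eqb_neq _ _) n0), (proj2 (Z.eqb_neq _ _) n1).
  assert (HK : 0 < IZR (Z.abs k)) by (generalize (IZR_abs_ge1 _ hk); lra).
  rewrite Rpower_plus.
  replace 2 with (INR 2) by (simpl; ring). rewrite Rpower_pow by auto.
  replace (IZR (Z.abs k) ^ 2) with (IZR k ^ 2) by (rewrite abs_IZR, pow2_abs; auto).
  assert (HS := Rpower_split s k k1 k2 hs n n0 n1 hk).
  set (c1 := Cmod (u k1)). set (c2 := Cmod (v k2)). set (c3 := Cmod (w (k - k1 - k2)%Z)).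
  assert (0 <= c1 * (c2 * c3) * IZR k ^ 2 / D).
  { unfold Rdiv. apply Rmult_le_pos. apply Rmult_le_pos. apply Rmult_le_pos. apply Cmod_ge_0.
    apply Rmult_le_pos; apply Cmod_ge_0. apply pow2_ge_0. left; apply Rinv_0_lt_compat; auto. }
  set (Q := c1 * (c2 * c3) * IZR k ^ 2 / D) in *.
  replace (Rpower (IZR (Z.abs k)) s * IZR k ^ 2 * (c1 * (c2 * c3) / D)) with (Rpower (IZR (Z.abs k)) s * Q)
    by (unfold Q, Rdiv; ring).
  replace (Rpower 3 s * (IZR k ^ 2 / D * (Rpower (IZR (Z.abs k1)) s * c1 * (Rpower (IZR (Z.abs k2)) s * c2 * (Rpower (IZR (Z.abs (k - k1 - k2))) s * c3)))))
    with (Rpower 3 s * (Rpower (IZR (Z.abs k1)) s * (Rpower (IZR (Z.abs k2)) s * Rpower (IZR (Z.abs (k - k1 - k2))) s)) * Q)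
    by (unfold Q, Rdiv; ring).
  apply Rmult_le_compat_r; auto.
Qed.


Section Main.
Variables (s t : R) (u v w : seqZ).
Hypothesis hs : 0 <= s.
Hypothesis hu : in_Hdot s u.
Hypothesis hv : in_Hdot s v.
Hypothesis hw : in_Hdot s w.

Definition NU := ZsumR (Hdot_term s u).
Definition NV := ZsumR (Hdot_term s v).
Definition NW := ZsumR (Hdot_term s w).

Lemma hdn f x : 0 <= Hdot_term s f x. Proof. apply Hdot_nonneg. Qed.

Lemma refl_sum (f : Z -> R) c : (forall x, 0 <= f x) -> zs f ->
  zs (fun x => f (c - x)%Z) /\ ZsumR (fun x => f (c - x)%Z) <= ZsumR f.
Proof. intros. apply reindex; auto. intros x y E; lia. Qed.

Lemma isum_T k : isum2 (Tcm t u v w k).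
Proof.
  assert (HU : zs (Ud s u)).
  { destruct (ZsumR_scal 6 g (proj1 g_sum)) as [a1 _].
    destruct (ZsumR_plus _ _ hu a1) as [a2 _].
    destruct (ZsumR_scal (/2) _ a2) as [a3 _].
    eapply zs_ext; [|exact a3]. intros; unfold Ud; simpl; unfold Rdiv; ring. }
  assert (Hbe : forall a, zs (fun b => Uf s v b * Uf s w (k - a - b)%Z) /\
                 ZsumR (fun b => Uf s v b * Uf s w (k - a - b)%Z) <= (NV + NW) / 2).
  { intros a. destruct (refl_sum (Hdot_term s w) (k - a)%Z (hdn w) hw) as [r1 r2].
    destruct (ZsumR_plus _ _ hv r1) as [p1 p2].
    destruct (ZsumR_scal (/2) _ p1) as [q1 q2].
    assert (Hle : forall x, 0 <= Uf s v x * Uf s w (k - a - x)%Z <=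
        / 2 * (Hdot_term s v x + Hdot_term s w (k - a - x)%Z)).
    { intros x. split. apply Rmult_le_pos; apply Uf_nonneg.
      rewrite <- !Uf_sq.
      assert (0 <= (Uf s v x - Uf s w (k - a - x)%Z)^2) by apply pow2_ge_0. nra. }
    destruct (ZsumR_le _ _ Hle q1) as [z1 z2].
    split. exact z1.
    eapply Rle_trans. exact z2.
    rewrite q2, p2. unfold NV, NW. lra. }
  destruct (prodlemma (fun a b => Ud s u a * (Uf s v b * Uf s w (k - a - b)%Z)) (Ud s u)
            (fun a b => Uf s v b * Uf s w (k - a - b)%Z) (ZsumR (Ud s u)) ((NV+NW)/2)) as [P1 P2];
    auto.
  - intros a; unfold Ud; generalize (hdn u a) (g_nonneg a); lra.
  - intros; apply Rmult_le_pos; apply Uf_nonneg.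
  - lra.
  - apply Hbe.
  - apply Hbe.
  - assert (0 <= NV) by (apply ZsumR_nonneg; auto; apply hdn).
    assert (0 <= NW) by (apply ZsumR_nonneg; auto; apply hdn). lra.
  - apply (isum2_le _ _ (fun a b => conj (Cmod_ge_0 _) (Tcm_sumbound s t u v w k a b hs)) P1).
Qed.

Definition Xf k a b := Uf s u a * (Uf s v b * Uf s w (k - a - b)%Z).

Lemma Xf_nonneg k a b : 0 <= Xf k a b.
Proof. unfold Xf. repeat apply Rmult_le_pos; apply Uf_nonneg. Qed.

Lemma NW_nonneg : 0 <= NW. Proof. apply ZsumR_nonneg; auto; apply hdn. Qed.
Lemma NV_nonneg : 0 <= NV. Proof. apply ZsumR_nonneg; auto; apply hdn. Qed.
Lemma NU_nonneg : 0 <= NU. Proof. apply ZsumR_nonneg; auto; apply hdn. Qed.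

Lemma isum_X2 k : isum2 (fun a b => (Xf k a b)^2) /\ I2 (fun a b => (Xf k a b)^2) <= NU * (NV * NW).
Proof.
  destruct (ZsumR_scal NW _ hv) as [q1 q2].
  assert (Hbe : forall a, zs (fun b => Hdot_term s v b * Hdot_term s w (k - a - b)%Z) /\
      ZsumR (fun b => Hdot_term s v b * Hdot_term s w (k - a - b)%Z) <= NV * NW).
  { intros a. assert (Hle : forall x, 0 <= Hdot_term s v x * Hdot_term s w (k - a - x)%Z <= NW * Hdot_term s v x).
    { intros x; split. apply Rmult_le_pos; apply hdn.
      rewrite Rmult_comm. apply Rmult_le_compat_r. apply hdn.
      apply (f_le_ZsumR (Hdot_term s w) (k - a - x)%Z (hdn w) hw). }
    destruct (ZsumR_le _ _ Hle q1) as [z1 z2]. split; auto. rewrite q2 in z2. unfold NV. lra. }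
  apply (prodlemma _ (Hdot_term s u) (fun a b => Hdot_term s v b * Hdot_term s w (k - a - b)%Z)); auto.
  - intros a b. unfold Xf. rewrite <- !Uf_sq. ring.
  - apply hdn.
  - intros; apply Rmult_le_pos; apply hdn.
  - unfold NU; lra.
  - apply Hbe.
  - apply Hbe.
  - apply Rmult_le_pos. apply NV_nonneg. apply NW_nonneg.
Qed.

Lemma div_abs_nonneg x y : 0 <= x -> 0 <= x / Rabs y.
Proof.
  intros H. unfold Rdiv. destruct (Rle_lt_or_eq_dec 0 (Rabs y) (Rabs_pos y)) as [h|h].
  apply Rmult_le_pos; auto. left; apply Rinv_0_lt_compat; auto.
  rewrite <- h, Rinv_0. lra.
Qed.

Lemma Mfun_nonneg k a b : 0 <= Mfun k a b.
Proof. unfold Mfun. cbv zeta. destruct (_ || _)%bool. lra. apply div_abs_nonneg, pow2_ge_0. Qed.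

Lemma isum_M2 k : isum2 (fun a b => (Mfun k a b)^2) /\ I2 (fun a b => (Mfun k a b)^2) <= S0.
Proof.
  destruct (Pfun_isum k) as [P1 P2].
  destruct (isum2_le (fun a b => (Mfun k a b)^2) (Pfun k) (fun a b => conj (pow2_ge_0 _) (Msq k a b)) P1) as [h1 h2].
  split; auto. lra.
Qed.

Lemma isum_MX k lam : 0 < lam ->
  isum2 (fun a b => Mfun k a b * Xf k a b) /\
  I2 (fun a b => Mfun k a b * Xf k a b) <= / 2 * (lam * I2 (fun a b => (Mfun k a b)^2) + / lam * I2 (fun a b => (Xf k a b)^2)).
Proof.
  intros hl.
  destruct (isum2_scal lam _ (proj1 (isum_M2 k))) as [a1 a2].
  destruct (isum2_scal (/lam) _ (proj1 (isum_X2 k))) as [b1 b2].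
  destruct (isum2_plus _ _ a1 b1) as [c1 c2].
  destruct (isum2_scal (/2) _ c1) as [d1 d2].
  assert (Hle : forall a b, 0 <= Mfun k a b * Xf k a b <=
     / 2 * (lam * (Mfun k a b)^2 + / lam * (Xf k a b)^2)).
  { intros a b. assert (m0 := Mfun_nonneg k a b). assert (x0 := Xf_nonneg k a b).
    split. apply Rmult_le_pos; auto.
    set (M := Mfun k a b). set (X := Xf k a b).
    assert (0 <= (lam * M - X)^2) by apply pow2_ge_0.
    assert (E : / 2 * (lam * M ^ 2 + / lam * X ^ 2) - M * X = / (2 * lam) * (lam * M - X)^2) by (field; lra).
    assert (0 <= / (2 * lam)) by (left; apply Rinv_0_lt_compat; lra).
    assert (0 <= / (2 * lam) * (lam * M - X)^2) by (apply Rmult_le_pos; auto). lra. }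
  destruct (isum2_le _ _ Hle d1) as [e1 e2].
  split; auto. eapply Rle_trans. exact e2. rewrite d2. cbv beta. rewrite c2, a2, b2. lra.
Qed.

Lemma I2_nonneg F : (forall a b, 0 <= F a b) -> isum2 F -> 0 <= I2 F.
Proof. intros H [H1 H2]. apply ZsumR_nonneg; auto. intros; apply ZsumR_nonneg. intros; apply H. apply H1. Qed.

Lemma S0_pos : 0 < S0. Proof. unfold S0, G2. lra. Qed.

Lemma Y_bound k : (I2 (fun a b => Mfun k a b * Xf k a b))^2 <= S0 * I2 (fun a b => (Xf k a b)^2).
Proof.
  set (Y := I2 (fun a b => Mfun k a b * Xf k a b)).
  set (Q := I2 (fun a b => (Xf k a b)^2)).
  set (S := I2 (fun a b => (Mfun k a b)^2)).
  assert (HY : 0 <= Y). { apply I2_nonneg. intros; apply Rmult_le_pos. apply Mfun_nonneg. apply Xf_nonneg.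
    apply (isum_MX k 1 ltac:(lra)). }
  assert (HQ : 0 <= Q). { apply I2_nonneg. intros; apply pow2_ge_0. apply isum_X2. }
  assert (HS : S <= S0) by apply isum_M2.
  assert (HS0 := S0_pos).
  destruct (Rle_lt_or_eq_dec 0 Y HY) as [h|h].
  - set (lam := Y / S0).
    assert (hl : 0 < lam) by (unfold lam; apply Rdiv_lt_0_compat; auto).
    destruct (isum_MX k lam hl) as [_ B]. fold Y S Q in B.
    assert (B2 : Y <= / 2 * (lam * S0 + / lam * Q)).
    { eapply Rle_trans. exact B. apply Rmult_le_compat_l. lra. apply Rplus_le_compat_r.
      apply Rmult_le_compat_l; lra. }
    assert (E : lam * S0 = Y) by (unfold lam; field; lra).
    rewrite E in B2. assert (E2 : / lam * Q = Q * S0 / Y) by (unfold lam; field; lra).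
    rewrite E2 in B2.
    assert (Y <= Q * S0 / Y) by lra.
    assert (Y * Y <= Q * S0 / Y * Y) by (apply Rmult_le_compat_r; lra).
    replace (Q * S0 / Y * Y) with (Q * S0) in H0 by (field; lra). nra.
  - rewrite <- h. assert (0 <= S0 * Q) by (apply Rmult_le_pos; lra). simpl. lra.
Qed.

Lemma CB_bound k : Cmod (B3 t u v w k) <= I2 (Tcm t u v w k).
Proof.
  destruct (isum_T k) as [T1 T2].
  unfold B3.
  assert (Hin : forall k1, Cmod (Zsum (fun k2 => B3_term t u v w k k1 k2)) <= ZsumR (Tcm t u v w k k1)).
  { intros k1. apply Zsum_bound. apply T1. }
  assert (Hz : zs (fun k1 => Cmod (Zsum (fun k2 => B3_term t u v w k k1 k2))) /\
     ZsumR (fun k1 => Cmod (Zsum (fun k2 => B3_term t u v w k k1 k2))) <= I2 (Tcm t u v w k)).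
  { apply ZsumR_le; auto. intros x; split. apply Cmod_ge_0. apply Hin. }
  eapply Rle_trans. apply Zsum_bound. apply Hz. apply Hz.
Qed.

Lemma Bk_bound k : k <> 0%Z ->
  Hdot_term (s + 2) (B3 t u v w) k <= (Rpower 3 s)^2 * (S0 * I2 (fun a b => (Xf k a b)^2)).
Proof.
  intros hk. unfold Hdot_term. rewrite (proj2 (Z.eqb_neq _ _) hk).
  set (K := IZR (Z.abs k)).
  set (Rr := Rpower K (s + 2)).
  replace (Rpower K (2 * (s + 2))) with (Rr * Rr) by (unfold Rr; rewrite <- Rpower_plus; f_equal; ring).
  assert (HR : 0 < Rr) by apply Rpower_pos.
  assert (HCB := CB_bound k).
  destruct (isum2_scal Rr _ (isum_T k)) as [a1 a2].
  destruct (isum2_scal (Rpower 3 s) _ (proj1 (isum_MX k 1 ltac:(lra)))) as [b1 b2].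
  assert (Hle : forall a b, 0 <= Rr * Tcm t u v w k a b <= Rpower 3 s * (Mfun k a b * Xf k a b)).
  { intros a b. split. apply Rmult_le_pos. lra. apply Cmod_ge_0.
    unfold Rr, K. apply Tcm_main; auto. }
  destruct (isum2_le _ _ Hle b1) as [c1 c2].
  rewrite a2, b2 in c2.
  set (Y := I2 (fun a b => Mfun k a b * Xf k a b)) in *.
  assert (HY := Y_bound k). fold Y in HY.
  assert (H0 : 0 <= Cmod (B3 t u v w k)) by apply Cmod_ge_0.
  assert (H1 : Rr * Cmod (B3 t u v w k) <= Rpower 3 s * Y).
  { eapply Rle_trans; [|exact c2]. apply Rmult_le_compat_l; lra. }
  assert (H2 : 0 <= Rr * Cmod (B3 t u v w k)) by (apply Rmult_le_pos; lra).
  assert (H3 : (Rr * Cmod (B3 t u v w k))^2 <= (Rpower 3 s * Y)^2) by (apply pow_incr; auto).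
  replace (Rr * Rr * Cmod (B3 t u v w k) ^ 2) with ((Rr * Cmod (B3 t u v w k))^2) by ring.
  eapply Rle_trans. exact H3. rewrite Rpow_mult_distr.
  apply Rmult_le_compat_l. apply pow2_ge_0. exact HY.
Qed.

Lemma lsum_ext_aux f1 f2 l : (forall k, f1 k = f2 k) -> lsum f1 l = lsum f2 l.
Proof. intros H; induction l; simpl; auto. rewrite H, IHl; auto. Qed.

Lemma lsum_scal (c : R) f l : lsum (fun k => c * f k) l = c * lsum f l.
Proof. induction l; simpl. ring. rewrite IHl. ring. Qed.

Lemma lsum_shift_le (f : Z -> R) c l : (forall x, 0 <= f x) -> zs f -> NoDup l ->
  lsum (fun k => f (k - c)%Z) l <= ZsumR f.
Proof.
  intros H0 Hz Hl.
  assert (E : lsum (fun k => f (k - c)%Z) l = lsum f (map (fun k => (k - c)%Z) l)).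
  { induction l; simpl; auto. rewrite IHl; auto. inversion Hl; auto. }
  rewrite E. apply key1; auto. apply Injective_map_NoDup; auto. intros x y h; lia.
Qed.

Lemma sumQ l : NoDup l -> lsum (fun k => I2 (fun a b => (Xf k a b)^2)) l <= NU * (NV * NW).
Proof.
  intros Hl. unfold I2.
  set (F := fun k a b => Hdot_term s u a * (Hdot_term s v b * Hdot_term s w (k - a - b)%Z)).
  assert (EF : forall k a b, (Xf k a b)^2 = F k a b).
  { intros; unfold F, Xf. rewrite <- !Uf_sq. ring. }
  assert (HF : forall k, isum2 (F k)).
  { intros k. destruct (isum_X2 k) as [[h1 h2] _]. split.
    - intros a. eapply zs_ext; [|apply (h1 a)]. intros; apply EF.
    - eapply zs_ext; [|exact h2]. intros; apply ZsumR_ext; intros; apply EF. }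
  rewrite (lsum_ext_aux (fun k => ZsumR (fun a => ZsumR (fun b => Xf k a b ^ 2))) (fun k => ZsumR (fun a => ZsumR (F k a))) l).
  2:{ intros k. apply ZsumR_ext; intros; apply ZsumR_ext; intros; apply EF. }
  destruct (lsum_ZsumR (fun k a => ZsumR (F k a)) l (fun k => proj2 (HF k))) as [L1 L2].
  rewrite <- L2.
  assert (Hinner : forall a, lsum (fun k => ZsumR (F k a)) l <= (NW * NV) * Hdot_term s u a).
  { intros a. destruct (lsum_ZsumR (fun k b => F k a b) l (fun k => proj1 (HF k) a)) as [M1 M2].
    replace (lsum (fun k => ZsumR (F k a)) l) with (ZsumR (fun b => lsum (fun k => F k a b) l))
      by (rewrite M2; reflexivity).
    destruct (ZsumR_scal (Hdot_term s u a * NW) _ hv) as [q1 q2].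
    assert (Hle : forall b, 0 <= lsum (fun k => F k a b) l <= Hdot_term s u a * NW * Hdot_term s v b).
    { intros b. split. apply lsum_nonneg. intros; unfold F; repeat apply Rmult_le_pos; apply hdn.
      unfold F. rewrite (lsum_ext_aux _ (fun k => (Hdot_term s u a * Hdot_term s v b) * Hdot_term s w (k - (a + b))%Z) l).
      2:{ intros k. replace (k - a - b)%Z with (k - (a + b))%Z by ring. ring. }
      rewrite lsum_scal.
      assert (lsum (fun k => Hdot_term s w (k - (a + b))%Z) l <= NW) by (apply lsum_shift_le; auto; apply hdn).
      assert (0 <= Hdot_term s u a * Hdot_term s v b) by (apply Rmult_le_pos; apply hdn).
      replace (Hdot_term s u a * NW * Hdot_term s v b) with ((Hdot_term s u a * Hdot_term s v b) * NW) by ring.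
      apply Rmult_le_compat_l; auto. }
    destruct (ZsumR_le _ _ Hle q1) as [r1 r2]. rewrite q2 in r2. unfold NV. 
    replace (NW * ZsumR (Hdot_term s v) * Hdot_term s u a) with (Hdot_term s u a * NW * ZsumR (Hdot_term s v)) by ring.
    exact r2. }
  destruct (ZsumR_scal (NW * NV) _ hu) as [q1 q2].
  assert (Hle : forall a, 0 <= lsum (fun k => ZsumR (F k a)) l <= NW * NV * Hdot_term s u a).
  { intros a; split; auto. apply lsum_nonneg. intros k. apply ZsumR_nonneg.
    intros; unfold F; repeat apply Rmult_le_pos; apply hdn. apply (proj1 (HF k) a). }
  destruct (ZsumR_le _ _ Hle q1) as [r1 r2]. rewrite q2 in r2. unfold NU. lra.
Qed.

Lemma main_sec :
  (forall k : Z, k <> 0%Z -> zsummable2 (B3_term t u v w k)) /\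
  in_Hdot (s + 2) (B3 t u v w) /\
  Hdot_norm (s + 2) (B3 t u v w) <= (Rpower 3 s * sqrt S0) * Hdot_norm s u * Hdot_norm s v * Hdot_norm s w.
Proof.
  set (C9 := (Rpower 3 s)^2).
  assert (HC9 : 0 <= C9) by apply pow2_ge_0.
  assert (HS0 := S0_pos).
  assert (HK : forall k, Hdot_term (s + 2) (B3 t u v w) k <= C9 * (S0 * I2 (fun a b => (Xf k a b)^2))).
  { intros k. destruct (Z.eq_dec k 0) as [->|hk].
    - unfold Hdot_term. simpl. apply Rmult_le_pos; auto. apply Rmult_le_pos. lra.
      apply I2_nonneg. intros; apply pow2_ge_0. apply isum_X2.
    - apply Bk_bound; auto. }
  assert (Hkey : ex_series (zpair (Hdot_term (s + 2) (B3 t u v w))) /\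
      ZsumR (Hdot_term (s + 2) (B3 t u v w)) <= C9 * S0 * (NU * (NV * NW))).
  { apply key2. intros; apply Hdot_nonneg.
    intros l Hl. eapply Rle_trans. apply lsum_le. apply HK.
    replace (lsum (fun k => C9 * (S0 * I2 (fun a b => Xf k a b ^ 2))) l)
      with (C9 * S0 * lsum (fun k => I2 (fun a b => Xf k a b ^ 2)) l).
    apply Rmult_le_compat_l. apply Rmult_le_pos; lra. apply sumQ; auto.
    rewrite <- lsum_scal. apply lsum_ext_aux. intros; ring. }
  split; [|split].
  - intros k hk. exact (isum_T k).
  - apply Hkey.
  - unfold Hdot_norm. fold NU NV NW.
    assert (hu0 := NU_nonneg). assert (hv0 := NV_nonneg). assert (hw0 := NW_nonneg).
    eapply Rle_trans. apply sqrt_le_1_alt. apply Hkey.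
    assert (E : sqrt (C9 * S0 * (NU * (NV * NW))) = Rpower 3 s * sqrt S0 * sqrt NU * sqrt NV * sqrt NW).
    { rewrite !sqrt_mult; try lra; try (apply Rmult_le_pos; lra); try (repeat apply Rmult_le_pos; lra).
      unfold C9. rewrite sqrt_pow2. ring. left; apply Rpower_pos. }
    rewrite E. lra.
Qed.
End Main.


Theorem lemma7p7 (s : R) (hs : 0 <= s) :
  exists c3 : R,
    forall (t : R) (u v w : seqZ),
      in_Hdot s u -> in_Hdot s v -> in_Hdot s w ->
      (forall k : Z, k <> 0%Z -> zsummable2 (B3_term t u v w k)) /\
      in_Hdot (s + 2) (B3 t u v w) /\
      Hdot_norm (s + 2) (B3 t u v w)
        <= c3 * Hdot_norm s u * Hdot_norm s v * Hdot_norm s w.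
Proof.
  exists (Rpower 3 s * sqrt S0). intros t u v w hu hv hw.
  apply main_sec; auto.
Qed.
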